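(* Let $P^1,\dots,P^4\in\mathbb{R}^n$ be in general position, let $Q^0$ be the equidistant point from $P^1,\dots,P^4$ with barycentric coordinate $\boldsymbol\lambda^0$, and suppose $\lambda^0_1<0$, $\lambda^0_2<0$, $\lambda^0_3\ge0$, $\lambda^0_4\ge0$. Let $Q^{1(1)}=\pi(Q^0|L(P^2,P^3,P^4))$ and $Q^{1(2)}=\pi(Q^0|L(P^1,P^3,P^4))$, with barycentric coordinates $\boldsymbol\lambda^{1(1)},\boldsymbol\lambda^{1(2)}$ about $P^1,\dots,P^4$, and suppose $\lambda^{1(2)}_1<0$. If moreover $\lambda^{1(1)}_2\ge0$, $\lambda^{1(1)}_3\ge0$, $\lambda^{1(1)}_4\ge0$, then the center of the smallest enclosing circle of $P^1,\dots,P^4$ is $Q^\ast=Q^{1(1)}$ and its radius is $d^\ast=d(P^2,Q^{1(1)})$.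
   Context: $d$ is the Euclidean distance. Points are in general position if $P^2-P^1,\dots,P^m-P^1$ are linearly independent. $L(S^1,\dots,S^r)$ is the affine subspace spanned by the points; $\pi(Q'|L)$ is the orthogonal projection onto the affine subspace $L$. The barycentric coordinate of $Q\in L(P^1,\dots,P^m)$ is the unique $\boldsymbol\lambda$ with $\sum_i\lambda_i=1$, $Q=\sum_i\lambda_iP^i$. The equidistant point is the unique $Q^0\in L(P^1,\dots,P^m)$ with all $d(P^i,Q^0)$ equal. The smallest enclosing circle has center $Q^\ast$ attaining $\min_Q\max_i d(P^i,Q)$ and radius $d^\ast$ equal to this minimum. *)

(* Defs.v *)
From HB Require Import structures.
From mathcomp Require Import all_boot all_order all_algebra.
From mathcomp Require Import reals.
Set Implicit Arguments. Unset Strict Implicit. Unset Printing Implicit Defensive.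
Import Order.TTheory GRing.Theory Num.Theory.
Local Open Scope ring_scope.

Section Geom.
Variable R : realType.
Variable n : nat.
Implicit Types u v Q : 'rV[R]_n.

Definition dotp u v : R := (u *m v^T) 0 0.
Definition dist u v : R := Num.sqrt (dotp (u - v) (u - v)).

Definition general_position (m : nat) (P : 'I_m.+1 -> 'rV[R]_n) : bool :=
  row_free (\matrix_(i < m) (P (lift ord0 i) - P ord0)).

Definition is_bary (k : nat) (S : 'I_k -> 'rV[R]_n) Q (lam : 'I_k -> R) : Prop :=
  \sum_(i < k) lam i = 1 /\ Q = \sum_(i < k) lam i *: S i.

Definition in_aff (k : nat) (S : 'I_k -> 'rV[R]_n) Q : Prop :=
  exists lam, is_bary S Q lam.

Definition is_proj (k : nat) (S : 'I_k -> 'rV[R]_n) Q X : Prop :=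
  in_aff S X /\ forall Y, in_aff S Y -> dotp (Q - X) (Y - X) = 0.

Definition is_equidistant (k : nat) (P : 'I_k -> 'rV[R]_n) Q0 : Prop :=
  in_aff P Q0 /\ forall i j, dist (P i) Q0 = dist (P j) Q0.

Definition maxdist (k : nat) (P : 'I_k -> 'rV[R]_n) Q : R :=
  \big[Num.max/0]_(i < k) dist (P i) Q.

Definition is_SEC_center (k : nat) (P : 'I_k -> 'rV[R]_n) Q : Prop :=
  forall Q', maxdist P Q <= maxdist P Q'.

End Geom.

(* 0-based names for the indices 1..4 *)
Definition i1 : 'I_4 := @Ordinal 4 0 isT.
Definition i2 : 'I_4 := @Ordinal 4 1 isT.
Definition i3 : 'I_4 := @Ordinal 4 2 isT.
Definition i4 : 'I_4 := @Ordinal 4 3 isT.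

(* Main.v *)
Require Import Defs.
From HB Require Import structures.
From mathcomp Require Import all_boot all_order all_algebra.
From mathcomp Require Import reals.
From mathcomp Require Import ring lra.
Import Order.TTheory GRing.Theory Num.Theory.
Local Open Scope ring_scope.
Set Implicit Arguments. Unset Strict Implicit.

Section Aux.
Variable R : realType.
Variable n : nat.
Implicit Types u v w : 'rV[R]_n.

Lemma dotE u v : dotp u v = \sum_k u 0 k * v 0 k.
Proof. by rewrite /dotp !mxE; apply: eq_bigr => k _; rewrite mxE. Qed.

Lemma dotpC u v : dotp u v = dotp v u.
Proof. by rewrite !dotE; apply: eq_bigr => k _; rewrite mulrC. Qed.

Lemma dotpDl u v w : dotp (u + v) w = dotp u w + dotp v w.
Proof. by rewrite !dotE -big_split; apply: eq_bigr => k _; rewrite !mxE mulrDl. Qed.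

Lemma dotpZl a u w : dotp (a *: u) w = a * dotp u w.
Proof. by rewrite !dotE mulr_sumr; apply: eq_bigr => k _; rewrite !mxE mulrA. Qed.

Lemma dotpNl u w : dotp (- u) w = - dotp u w.
Proof. by rewrite -scaleN1r dotpZl mulN1r. Qed.

Lemma dotpDr u v w : dotp w (u + v) = dotp w u + dotp w v.
Proof. by rewrite dotpC dotpDl !(dotpC w). Qed.

Lemma dotpZr a u w : dotp w (a *: u) = a * dotp w u.
Proof. by rewrite dotpC dotpZl dotpC. Qed.

Lemma dotpNr u w : dotp w (- u) = - dotp w u.
Proof. by rewrite dotpC dotpNl dotpC. Qed.

Lemma dotp_ge0 u : 0 <= dotp u u.
Proof. by rewrite dotE; apply: sumr_ge0 => k _; rewrite -expr2 sqr_ge0. Qed.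

Lemma dotp_eq0 u : dotp u u = 0 -> u = 0.
Proof.
rewrite dotE => /psumr_eq0P H.
apply/rowP => k; rewrite mxE.
have := H (fun i _ => ltac:(rewrite -expr2; exact: sqr_ge0)) k isT; rewrite -expr2 => /eqP.
by rewrite sqrf_eq0 => /eqP.
Qed.

Lemma sqD u v : dotp (u + v) (u + v) = dotp u u + 2 * dotp u v + dotp v v.
Proof. rewrite !dotpDl !dotpDr (dotpC v u); ring. Qed.

Lemma sqB u v : dotp (u - v) (u - v) = dotp u u - 2 * dotp u v + dotp v v.
Proof. rewrite !dotpDl !dotpDr !dotpNl !dotpNr (dotpC v u); ring. Qed.

Lemma distsq u v : dist u v ^+ 2 = dotp (u - v) (u - v).
Proof. by rewrite /dist sqr_sqrtr // dotp_ge0. Qed.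

Lemma dist_ge0 u v : 0 <= dist u v.
Proof. exact: sqrtr_ge0. Qed.

Lemma dot_comb4 w (x1 x2 x3 x4 : 'rV[R]_n) a b c d :
  dotp w (a *: x1 + b *: x2 + c *: x3 + d *: x4) =
  a * dotp w x1 + b * dotp w x2 + c * dotp w x3 + d * dotp w x4.
Proof. by rewrite !dotpDr !dotpZr. Qed.

Lemma dot_comb3l w (x1 x2 x3 : 'rV[R]_n) a b c :
  dotp (a *: x1 + b *: x2 + c *: x3) w =
  a * dotp x1 w + b * dotp x2 w + c * dotp x3 w.
Proof. by rewrite !dotpDl !dotpZl. Qed.

Lemma subr_split (a b c : 'rV[R]_n) : a - b = (a - c) - (b - c).
Proof. by rewrite opprB addrA subrK. Qed.

Lemma subr_split2 (a b c : 'rV[R]_n) : a - b = (a - c) + (c - b).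
Proof. by rewrite addrA subrK. Qed.

Lemma bary_uniq m (P : 'I_m.+1 -> 'rV[R]_n) (a : 'I_m.+1 -> R) :
  general_position P -> \sum_i a i = 0 -> \sum_i a i *: P i = 0 ->
  forall i, a i = 0.
Proof.
move=> gp; rewrite !big_ord_recl => s0 e0.
set v : 'rV[R]_m := \row_(j < m) a (lift ord0 j).
have hv : v *m (\matrix_(i < m) (P (lift ord0 i) - P ord0)) = 0 *m
     (\matrix_(i < m) (P (lift ord0 i) - P ord0)).
  rewrite mul0mx mulmx_sum_row.
  have a0E : a ord0 = - \sum_(i < m) a (lift ord0 i).
    by apply/eqP; rewrite -subr_eq0 opprK; apply/eqP.
  rewrite a0E scaleNr scaler_suml in e0.
  rewrite -[RHS]e0 addrC -sumrB; apply: eq_bigr => j _.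
  by rewrite rowK mxE scalerBr.
have v0 := row_free_inj gp hv.
have aj : forall j, a (lift ord0 j) = 0.
  by move=> j; have := congr1 (fun M : 'rV[R]_m => M 0 j) v0; rewrite !mxE.
move=> i; case: (unliftP ord0 i) => [j ->|->]; first exact: aj.
move: s0; rewrite big1 ?addr0 //.
Qed.

End Aux.

Lemma big4 (T : Type) (op : T -> T -> T) (x : T) (F : 'I_4 -> T) :
  \big[op/x]_(i < 4) F i = op (F i1) (op (F i2) (op (F i3) (op (F i4) x))).
Proof.
rewrite !big_ord_recl big_ord0.
have -> : (lift ord0 ord0 : 'I_4) = i2 by apply/val_inj.
have -> : (lift ord0 (lift ord0 ord0) : 'I_4) = i3 by apply/val_inj.
have -> : (lift ord0 (lift ord0 (lift ord0 ord0)) : 'I_4) = i4 by apply/val_inj.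
by have -> : (ord0 : 'I_4) = i1 by apply/val_inj.
Qed.

Lemma sum4 (V : nmodType) (F : 'I_4 -> V) :
  \sum_(i < 4) F i = F i1 + F i2 + F i3 + F i4.
Proof. by rewrite big4 addr0 !addrA. Qed.

Definition j0 : 'I_3 := @Ordinal 3 0 isT.
Definition j1 : 'I_3 := @Ordinal 3 1 isT.
Definition j2 : 'I_3 := @Ordinal 3 2 isT.

Lemma sum3 (V : nmodType) (F : 'I_3 -> V) :
  \sum_(i < 3) F i = F j0 + F j1 + F j2.
Proof.
rewrite !big_ord_recl big_ord0 addr0 !addrA.
have -> : (lift ord0 ord0 : 'I_3) = j1 by apply/val_inj.
have -> : (lift ord0 (lift ord0 ord0) : 'I_3) = j2 by apply/val_inj.
by have -> : (ord0 : 'I_3) = j0 by apply/val_inj.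
Qed.

Lemma lift_j0 : lift i1 j0 = i2. Proof. by apply/val_inj. Qed.
Lemma lift_j1 : lift i1 j1 = i3. Proof. by apply/val_inj. Qed.
Lemma lift_j2 : lift i1 j2 = i4. Proof. by apply/val_inj. Qed.

Section Core.
Variable R : realType.
Variable n : nat.

Lemma uniq4 (P : 'I_4 -> 'rV[R]_n) (a1 a2 a3 a4 b2 b3 b4 : R) :
  general_position P -> a1 + a2 + a3 + a4 = b2 + b3 + b4 ->
  a1 *: P i1 + a2 *: P i2 + a3 *: P i3 + a4 *: P i4 =
  b2 *: P i2 + b3 *: P i3 + b4 *: P i4 -> a1 = 0.
Proof.
move=> gp hs he.
have := @bary_uniq R n 3 P (fun i => nth 0 [:: a1; a2 - b2; a3 - b3; a4 - b4] i) gp.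
rewrite !sum4 /= => H; apply: (H _ _ i1).
- lra.
- apply/rowP => k; have := congr1 (fun M : 'rV[R]_n => M 0 k) he.
  rewrite !mxE => h; lra.
Qed.

Lemma core_a (P1 P2 P3 P4 Q0 Q11 : 'rV[R]_n) (l1 l2 l3 l4 : R) :
  l1 + l2 + l3 + l4 = 1 ->
  Q0 = l1 *: P1 + l2 *: P2 + l3 *: P3 + l4 *: P4 -> l1 < 0 ->
  dotp (Q0 - Q11) (P2 - Q11) = 0 ->
  dotp (Q0 - Q11) (P3 - Q11) = 0 ->
  dotp (Q0 - Q11) (P4 - Q11) = 0 ->
  dotp (P1 - Q0) (P1 - Q0) = dotp (P2 - Q0) (P2 - Q0) ->
  dotp (P3 - Q0) (P3 - Q0) = dotp (P2 - Q0) (P2 - Q0) ->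
  dotp (P4 - Q0) (P4 - Q0) = dotp (P2 - Q0) (P2 - Q0) ->
  [/\ dotp (P3 - Q11) (P3 - Q11) = dotp (P2 - Q11) (P2 - Q11),
      dotp (P4 - Q11) (P4 - Q11) = dotp (P2 - Q11) (P2 - Q11) &
      dotp (P1 - Q11) (P1 - Q11) <= dotp (P2 - Q11) (P2 - Q11)].
Proof.
move=> hl e0 l1n o2 o3 o4 q1 q3 q4.
have zE : Q0 - Q11 = l1 *: (P1 - Q11) + l2 *: (P2 - Q11) + l3 *: (P3 - Q11)
                     + l4 *: (P4 - Q11).
  apply/rowP => k; rewrite e0 !mxE.
  have -> : l4 = 1 - l1 - l2 - l3 by lra.
  ring.
have hz : dotp (Q0 - Q11) (Q0 - Q11) = l1 * dotp (Q0 - Q11) (P1 - Q11).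
  have := @dot_comb4 R n (Q0 - Q11) (P1-Q11) (P2-Q11) (P3-Q11) (P4-Q11) l1 l2 l3 l4.
  rewrite -zE o2 o3 o4 => ->; ring.
have hz0 := dotp_ge0 (Q0 - Q11).
move: q1 q3 q4.
rewrite (subr_split P1 Q0 Q11) (subr_split P2 Q0 Q11) (subr_split P3 Q0 Q11)
  (subr_split P4 Q0 Q11) !sqB !(dotpC (_ - Q11) (Q0 - Q11)) o2 o3 o4 => q1 q3 q4.
split; [lra | lra | nra].
Qed.

Lemma core_b (P2 P3 P4 Q11 Q' : 'rV[R]_n) (m2 m3 m4 : R) :
  m2 + m3 + m4 = 1 -> Q11 = m2 *: P2 + m3 *: P3 + m4 *: P4 ->
  dotp (P3 - Q11) (P3 - Q11) = dotp (P2 - Q11) (P2 - Q11) ->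
  dotp (P4 - Q11) (P4 - Q11) = dotp (P2 - Q11) (P2 - Q11) ->
  m2 * dotp (P2 - Q') (P2 - Q') + m3 * dotp (P3 - Q') (P3 - Q')
    + m4 * dotp (P4 - Q') (P4 - Q')
  = dotp (P2 - Q11) (P2 - Q11) + dotp (Q11 - Q') (Q11 - Q').
Proof.
move=> hm e11 d3 d4.
have hx : m2 *: (P2 - Q11) + m3 *: (P3 - Q11) + m4 *: (P4 - Q11) = 0.
  apply/rowP => k; rewrite {1 2 3}e11 !mxE.
  have -> : m4 = 1 - m2 - m3 by lra.
  ring.
have hs : m2 * dotp (P2 - Q11) (Q11 - Q') + m3 * dotp (P3 - Q11) (Q11 - Q')
          + m4 * dotp (P4 - Q11) (Q11 - Q') = 0.
  rewrite -dot_comb3l hx.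
  by rewrite -(scale0r (0 : 'rV[R]_n)) dotpZl mul0r.
rewrite (subr_split2 P2 Q' Q11) (subr_split2 P3 Q' Q11) (subr_split2 P4 Q' Q11)
  (sqD (P2 - Q11)) (sqD (P3 - Q11)) (sqD (P4 - Q11)) d3 d4.
transitivity ((m2 + m3 + m4) * (dotp (P2 - Q11) (P2 - Q11) +
   dotp (Q11 - Q') (Q11 - Q')) +
  2 * (m2 * dotp (P2 - Q11) (Q11 - Q') + m3 * dotp (P3 - Q11) (Q11 - Q')
          + m4 * dotp (P4 - Q11) (Q11 - Q'))); first ring.
rewrite hs hm; ring.
Qed.

End Core.

Theorem theorem9 (R : realType) (n : nat) (P : 'I_4 -> 'rV[R]_n)
  (Q0 Q11 Q12 : 'rV[R]_n) (lam0 lam11 lam12 : 'I_4 -> R) :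
  general_position P ->
  is_equidistant P Q0 -> is_bary P Q0 lam0 ->
  lam0 i1 < 0 -> lam0 i2 < 0 -> 0 <= lam0 i3 -> 0 <= lam0 i4 ->
  is_proj (fun j : 'I_3 => P (lift i1 j)) Q0 Q11 -> is_bary P Q11 lam11 ->
  is_proj (fun j : 'I_3 => P (lift i2 j)) Q0 Q12 -> is_bary P Q12 lam12 ->
  lam12 i1 < 0 ->
  0 <= lam11 i2 -> 0 <= lam11 i3 -> 0 <= lam11 i4 ->
  is_SEC_center P Q11 /\ (forall Q, is_SEC_center P Q -> Q = Q11) /\
  maxdist P Q11 = dist (P i2) Q11.
Proof.
move=> gp [_ eqd] [s0 e0] l01 l02 l03 l04 [[mu [smu emu]] orth1] [s11 e11]
  _ _ _ h2 h3 h4.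
rewrite sum4 in s0; rewrite sum4 in e0; rewrite sum4 in s11; rewrite sum4 in e11.
rewrite sum3 in smu; rewrite sum3 /= lift_j0 lift_j1 lift_j2 in emu.
have inf : forall k : 'I_3, in_aff (fun j => P (lift i1 j)) (P (lift i1 k)).
  move=> k; exists (fun j => (j == k)%:R); split.
  - by rewrite (bigD1 k) //= eqxx big1 ?addr0 // => j /negbTE ->.
  - rewrite (bigD1 k) //= eqxx scale1r big1 ?addr0 // => j /negbTE ->.
    by rewrite scale0r.
have o2 := orth1 _ (inf j0); rewrite /= lift_j0 in o2.
have o3 := orth1 _ (inf j1); rewrite /= lift_j1 in o3.
have o4 := orth1 _ (inf j2); rewrite /= lift_j2 in o4.
have l11 : lam11 i1 = 0.
  apply: (uniq4 (a2 := lam11 i2) (a3 := lam11 i3) (a4 := lam11 i4) (b2 := mu j0) (b3 := mu j1) (b4 := mu j2) gp).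
  - by rewrite s11 smu.
  - by rewrite -e11 -emu.
have eq i : dotp (P i - Q0) (P i - Q0) = dotp (P i2 - Q0) (P i2 - Q0).
  by rewrite -!distsq (eqd i i2).
have [d3 d4 d1] := core_a s0 e0 l01 o2 o3 o4 (eq i1) (eq i3) (eq i4).
have m_sum : lam11 i2 + lam11 i3 + lam11 i4 = 1.
  by move: s11; rewrite l11 add0r.
have e11' : Q11 = lam11 i2 *: P i2 + lam11 i3 *: P i3 + lam11 i4 *: P i4.
  by rewrite e11 l11 scale0r add0r.
have cb := fun Q' => core_b Q' m_sum e11' d3 d4.
have hd1 : dist (P i1) Q11 <= dist (P i2) Q11.
  by rewrite /dist ler_sqrt ?dotp_ge0.
have hd3 : dist (P i3) Q11 = dist (P i2) Q11 by rewrite /dist d3.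
have hd4 : dist (P i4) Q11 = dist (P i2) Q11 by rewrite /dist d4.
have r0 := dist_ge0 (P i2) Q11.
have hmax : maxdist P Q11 = dist (P i2) Q11.
  rewrite /maxdist big4; apply/le_anti/andP; split.
  - by rewrite !ge_max hd1 hd3 hd4 lexx r0.
  - by rewrite le_max le_max lexx orbT.
have M0 Q : 0 <= maxdist P Q.
  by rewrite /maxdist big4 !le_max lexx !orbT.
have hl2 Q : dist (P i2) Q <= maxdist P Q.
  by rewrite /maxdist big4 !le_max lexx !orbT.
have hl3 Q : dist (P i3) Q <= maxdist P Q.
  by rewrite /maxdist big4 !le_max lexx !orbT.
have hl4 Q : dist (P i4) Q <= maxdist P Q.
  by rewrite /maxdist big4 !le_max lexx !orbT.
have hsq i Q : dist (P i) Q <= maxdist P Q ->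
    dotp (P i - Q) (P i - Q) <= maxdist P Q ^+ 2.
  rewrite -distsq => h; have := dist_ge0 (P i) Q; nra.
have key Q : dotp (P i2 - Q11) (P i2 - Q11) + dotp (Q11 - Q) (Q11 - Q)
    <= maxdist P Q ^+ 2.
  rewrite -cb; have := hsq _ _ (hl2 Q); have := hsq _ _ (hl3 Q);
  have := hsq _ _ (hl4 Q); nra.
have r2E : dist (P i2) Q11 ^+ 2 = dotp (P i2 - Q11) (P i2 - Q11) by rewrite distsq.
split; [|split; last exact: hmax].
- move=> Q'; rewrite hmax.
  have := key Q'; have := dotp_ge0 (Q11 - Q'); move=> y0 k.
  rewrite /dist -[maxdist P Q'](ger0_norm (M0 Q')) -sqrtr_sqr ler_sqrt ?sqr_ge0 //.
  lra.
- move=> Q hQ; have := hQ Q11; rewrite hmax => hM.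
  have hM2 : maxdist P Q ^+ 2 <= dist (P i2) Q11 ^+ 2.
    have := M0 Q; nra.
  have := key Q; have := dotp_ge0 (Q11 - Q) => y0 k.
  have : dotp (Q11 - Q) (Q11 - Q) = 0 by lra.
  by move/dotp_eq0/eqP; rewrite subr_eq0 => /eqP.
Qed.
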